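(* Let $\mathcal D$ be universal with at least two blocks, let $\mathcal B$ be the block containing $\min(\mathcal D\setminus\{0\})$ and $\mathbf m=\max\mathcal B$. Let $\mathrm M=(M,d)\in\mathfrak U_{\mathcal D}$, let $a\in M$, and let $X=\{x\in M: d(a,x)<\mathbf m\}$. Then the subspace of $\mathrm M$ on $M\setminus X$ is a copy of $\mathrm M$ in $\mathrm M$ (i.e. is isometric to $\mathrm M$).
   Context: $\mathcal D$ is a finite subset of $\mathbb R_{\ge0}$ containing $0$. $\mathfrak U_{\mathcal D}$ is the class of countable homogeneous metric spaces (every isometry between finite subspaces extends to an isometry of the space onto itself) with distance set exactly $\mathcal D$ into which every finite metric space with distances in $\mathcal D$ embeds isometrically; $\mathcal D$ is universal if this class is nonempty. For $r\in\mathcal D$ with $r<\max\mathcal D$, $r^{+}$ is the smallest element of $\mathcal D$ larger than $r$; for $r>0$, $r^{-}$ is the largest element of $\mathcal D$ smaller than $r$. A block of $\mathcal D$ is a nonempty set $\mathcal B=\{b_0<b_1<\dots<b_n\}\subseteq\mathcal D\setminus\{0\}$ such that $b_0>2b_0^{-}$, $b_{i+1}=b_i^{+}$ for all $i<n$, and $b_i+b_0\ge b_{i+1}$ for all $i<n$; for universal $\mathcal D$ the blocks partition $\mathcal D\setminus\{0\}$. *)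

(* Defs.v *)
From Stdlib Require Import Reals List.
Import ListNotations.
Open Scope R_scope.

Definition is_metric (M : Type) (d : M -> M -> R) : Prop :=
  (forall x y, d x y = 0 <-> x = y) /\
  (forall x y, d x y = d y x) /\
  (forall x y z, d x z <= d x y + d y z).

Definition countable_type (M : Type) : Prop :=
  exists f : M -> nat, forall x y, f x = f y -> x = y.

Definition distance_set_is (D : list R) (M : Type) (d : M -> M -> R) : Prop :=
  (forall x y, In (d x y) D) /\ (forall r, In r D -> exists x y, d x y = r).

Definition homogeneous (M : Type) (d : M -> M -> R) : Prop :=
  forall (n : nat) (u v : nat -> M),
    (forall i j, (i < n)%nat -> (j < n)%nat -> d (u i) (u j) = d (v i) (v j)) ->
    exists g : M -> M,
      (forall x y, d (g x) (g y) = d x y) /\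
      (forall y, exists x, g x = y) /\
      (forall i, (i < n)%nat -> g (u i) = v i).

Definition finite_metric_in (D : list R) (n : nat) (e : nat -> nat -> R) : Prop :=
  (forall i j, (i < n)%nat -> (j < n)%nat -> (e i j = 0 <-> i = j)) /\
  (forall i j, (i < n)%nat -> (j < n)%nat -> e i j = e j i) /\
  (forall i j k, (i < n)%nat -> (j < n)%nat -> (k < n)%nat -> e i k <= e i j + e j k) /\
  (forall i j, (i < n)%nat -> (j < n)%nat -> In (e i j) D).

Definition embeds_all_finite (D : list R) (M : Type) (d : M -> M -> R) : Prop :=
  forall (n : nat) (e : nat -> nat -> R), finite_metric_in D n e ->
    exists u : nat -> M, forall i j, (i < n)%nat -> (j < n)%nat -> d (u i) (u j) = e i j.

Definition in_UD (D : list R) (M : Type) (d : M -> M -> R) : Prop :=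
  is_metric M d /\ countable_type M /\ homogeneous M d /\
  distance_set_is D M d /\ embeds_all_finite D M d.

Definition universal (D : list R) : Prop :=
  exists (M : Type) (d : M -> M -> R), in_UD D M d.

Definition is_pred (D : list R) (r p : R) : Prop :=
  In p D /\ p < r /\ forall q, In q D -> q < r -> q <= p.

Definition is_succ (D : list R) (r s : R) : Prop :=
  In s D /\ r < s /\ forall q, In q D -> r < q -> s <= q.

(* A block B = [b0; b1; ...; bn] (listed in increasing order), required to be
   maximal. *)
Definition is_block (D : list R) (B : list R) : Prop :=
  exists b0 rest, B = b0 :: rest /\
    (forall b, In b B -> In b D /\ 0 < b) /\
    (exists p, is_pred D b0 p /\ 2 * p < b0) /\
    (forall i, (S i < length B)%nat ->
        is_succ D (nth i B 0) (nth (S i) B 0) /\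
        nth (S i) B 0 <= nth i B 0 + b0) /\
    (forall c, is_succ D (last B 0) c -> last B 0 + b0 < c).

Definition is_min_pos (D : list R) (r : R) : Prop :=
  In r D /\ 0 < r /\ forall q, In q D -> 0 < q -> r <= q.

Definition is_max_of (B : list R) (m : R) : Prop :=
  In m B /\ forall b, In b B -> b <= m.

(* Main.v *)
Require Import Defs.
From Stdlib Require Import Reals List Lra Lia ClassicalEpsilon Classical.
Import ListNotations.
Open Scope R_scope.

Definition EP (D : list R) (T : Type) (d : T -> T -> R) (S : T -> Prop) : Prop :=
  forall pr : list (T * R),
    NoDup (map fst pr) ->
    (forall p r, In (p, r) pr -> S p /\ In r D /\ 0 < r) ->
    (forall p r p' r', In (p, r) pr -> In (p', r') pr ->
        d p p' <= r + r' /\ r <= r' + d p p') ->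
    exists z, S z /\ forall p r, In (p, r) pr -> d z p = r.

Lemma d_nonneg T d : is_metric T d -> forall x y, 0 <= d x y.
Proof.
  intros [H0 [Hs Ht]] x y. pose proof (Ht x y x) as r.
  rewrite (proj2 (H0 x x) eq_refl), (Hs y x) in r. lra.
Qed.

Lemma EP_full D T d : in_UD D T d -> forall a : T, EP D T d (fun _ => True).
Proof.
  intros [Hmet [_ [Hhom [[HdD _] Hemb]]]] a pr Hnd Hpr Hcond.
  pose proof (d_nonneg T d Hmet) as dnn.
  destruct Hmet as [H0 [Hs Ht]].
  remember (length pr) as n eqn:Hn.
  set (P := fun i => fst (nth i pr (a,0))).
  set (Rr := fun i => snd (nth i pr (a,0))).
  assert (HIn : forall i, (i < n)%nat -> In (P i, Rr i) pr).
  { intros i Hi. unfold P, Rr. rewrite <- surjective_pairing. apply nth_In. lia. }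
  assert (Hinj : forall i j, (i<n)%nat -> (j<n)%nat -> P i = P j -> i = j).
  { intros i j Hi Hj E. unfold P in E.
    rewrite <- !(map_nth fst pr (a,0)) in E.
    apply (proj1 (NoDup_nth (map fst pr) (fst (a,0))) Hnd); rewrite ?length_map; auto; lia. }
  assert (Hpos : forall i, (i < n)%nat -> 0 < Rr i /\ In (Rr i) D).
  { intros i Hi. destruct (Hpr _ _ (HIn i Hi)) as [_ [? ?]]. auto. }
  assert (Hc : forall i j, (i < n)%nat -> (j < n)%nat ->
            d (P i) (P j) <= Rr i + Rr j /\ Rr i <= Rr j + d (P i) (P j)).
  { intros i j Hi Hj. apply Hcond; apply HIn; auto. }
  set (e := fun i j => if Nat.ltb i n then (if Nat.ltb j n then d (P i) (P j) else Rr i)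
                       else (if Nat.ltb j n then Rr j else 0)).
  assert (Hfm : finite_metric_in D (S n) e).
  { unfold finite_metric_in, e; split; [|split; [|split]].
    - intros i j Hi Hj.
      destruct (Nat.ltb_spec i n), (Nat.ltb_spec j n).
      + split; intro E.
        * apply Hinj; auto. apply H0; auto.
        * subst. apply H0; auto.
      + assert (j = n) by lia. subst. pose proof (Hpos i H). split; intro; [lra|lia].
      + assert (i = n) by lia. subst. pose proof (Hpos j H1). split; intro; [lra|lia].
      + split; intro; [lia|reflexivity].
    - intros i j Hi Hj.
      destruct (Nat.ltb_spec i n), (Nat.ltb_spec j n); auto.
    - intros i j k Hi Hj Hk.
      pose proof (Ht (P i) (P j) (P k)).
      pose proof (Hc i j) as c1. pose proof (Hc j k) as c2. pose proof (Hc i k) as c3.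
      pose proof (Hc k j) as c4. pose proof (Hc j i) as c5. pose proof (Hc k i) as c6.
      pose proof (Hpos i) as p1. pose proof (Hpos j) as p2. pose proof (Hpos k) as p3.
      pose proof (Hs (P i) (P j)). pose proof (Hs (P j) (P k)). pose proof (Hs (P i) (P k)).
      destruct (Nat.ltb_spec i n), (Nat.ltb_spec j n), (Nat.ltb_spec k n);
      repeat match goal with H : (?x < ?y)%nat -> _, H' : (?x < ?y)%nat |- _ => specialize (H H') end;
      repeat match goal with H : _ /\ _ |- _ => destruct H end;
      try lra.
    - intros i j Hi Hj.
      destruct (Nat.ltb_spec i n), (Nat.ltb_spec j n); auto;
        first [ apply (proj2 (Hpos i ltac:(lia))) | apply (proj2 (Hpos j ltac:(lia)))
              | rewrite <- (proj2 (H0 a a) eq_refl); apply HdD ]. }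
  destruct (Hemb (S n) e Hfm) as [u Hu].
  destruct (Hhom n u P) as [g [Hg [_ Hgv]]].
  { intros i j Hi Hj. rewrite Hu by lia. unfold e.
    rewrite (proj2 (Nat.ltb_lt i n) Hi), (proj2 (Nat.ltb_lt j n) Hj). reflexivity. }
  exists (g (u n)). split; [exact I|]. intros p r Hin.
  destruct (In_nth _ _ (a,0) Hin) as [i [Hi Hnth]].
  rewrite <- Hn in Hi.
  assert (Ep : P i = p) by (unfold P; rewrite Hnth; reflexivity).
  assert (Er : Rr i = r) by (unfold Rr; rewrite Hnth; reflexivity).
  rewrite <- Ep, <- (Hgv i Hi), Hg, Hu by lia. unfold e.
  rewrite Nat.ltb_irrefl, (proj2 (Nat.ltb_lt i n) Hi). auto.
Qed.

Lemma EP_ball D T d (Hu : in_UD D T d) a m (HmD : In m D) (Hm0 : 0 < m) :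
  EP D T d (fun y => ~ d a y < m).
Proof.
  intros pr Hnd Hpr Hcond.
  pose proof Hu as [Hmet [_ [_ [[HdD _] _]]]].
  pose proof (d_nonneg T d Hmet) as dnn.
  destruct Hmet as [H0 [Hs Ht]].
  destruct (EP_full D T d Hu a pr Hnd) as [z0 [_ Hz0]].
  { intros p r H. destruct (Hpr p r H) as [_ X]. split; auto. }
  { exact Hcond. }
  assert (Hd : exists δ, In δ D /\ m <= δ /\ forall p r, In (p,r) pr ->
             d a p <= δ + r /\ δ <= r + d a p /\ r <= δ + d a p).
  { destruct (Rlt_dec (d a z0) m) as [Hlt|Hge].
    - exists m. split; auto. split; [lra|]. intros p r Hin.
      destruct (Hpr p r Hin) as [Hp [_ Hr]]. pose proof (Hz0 p r Hin).
      pose proof (Ht a z0 p). pose proof (Ht z0 a p). pose proof (Hs z0 a). lra.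
    - exists (d a z0). split; auto. split; [lra|]. intros p r Hin.
      destruct (Hpr p r Hin) as [Hp [_ Hr]]. pose proof (Hz0 p r Hin).
      pose proof (Ht a z0 p). pose proof (Ht z0 a p). pose proof (Ht a p z0).
      pose proof (Hs z0 a). pose proof (Hs p z0). lra. }
  destruct Hd as [δ [HδD [Hmδ Hδ]]].
  assert (Haa : d a a = 0) by (apply H0; auto).
  destruct (EP_full D T d Hu a ((a,δ)::pr)) as [z [_ Hz]].
  - simpl. constructor; auto. intro Hin. apply in_map_iff in Hin as [[p r] [E Hin]].
    simpl in E. subst. destruct (Hpr _ _ Hin) as [Hp _]. apply Hp. lra.
  - intros p r [E|Hin].
    + injection E; intros; subst p r. split; auto. split; auto. lra.
    + destruct (Hpr p r Hin) as [_ X]. auto.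
  - intros p r p' r' [E|H1] [E'|H2];
      try (injection E; intros; subst p r); try (injection E'; intros; subst p' r').
    + lra.
    + destruct (Hδ _ _ H2). destruct (Hpr _ _ H2) as [_ [_ ?]]. lra.
    + destruct (Hδ _ _ H1). pose proof (Hs p a). lra.
    + apply Hcond; auto.
  - exists z. split.
    + pose proof (Hz a δ (or_introl eq_refl)). rewrite Hs. lra.
    + intros p r Hin. apply Hz. right. auto.
Qed.

Definition Inv T (d : T -> T -> R) (SA SB : T -> Prop) (l : list (T*T)) : Prop :=
  (forall x y x' y', In (x,y) l -> In (x',y') l -> d x x' = d y y') /\
  (forall x y, In (x,y) l -> SA x /\ SB y) /\ NoDup (map fst l).

Definition sw {T} (p : T*T) : T*T := (snd p, fst p).

Lemma nodup_snd T d (Hm : is_metric T d) (l : list (T*T)) :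
  (forall x y x' y', In (x,y) l -> In (x',y') l -> d x x' = d y y') ->
  NoDup (map fst l) -> NoDup (map snd l).
Proof.
  destruct Hm as [H0 _].
  induction l as [|[x y] l IH]; simpl; intros Hiso Hnd; constructor.
  - inversion Hnd as [|? ? Hn1 Hn2]; subst. intro Hin. apply in_map_iff in Hin as [[x' y'] [E Hin]].
    simpl in E; subst y'. apply Hn1. apply in_map_iff. exists (x', y). split; auto.
    simpl. symmetry. apply H0. rewrite (Hiso x y x' y) by auto. apply H0; auto.
  - inversion Hnd as [|? ? Hn1 Hn2]; subst. apply IH; auto.
Qed.

Lemma In_sw T (l : list (T*T)) x y : In (x,y) (map sw l) <-> In (y,x) l.
Proof.
  split; intro H.
  - apply in_map_iff in H as [[u v] [E H]]. unfold sw in E; simpl in E.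
    injection E; intros; subst; auto.
  - apply in_map_iff. exists (y,x). auto.
Qed.

Lemma sw_sw T (l : list (T*T)) : map sw (map sw l) = l.
Proof. induction l as [|[x y] l IH]; simpl; f_equal; auto. Qed.

Lemma Inv_swap T d (Hm : is_metric T d) SA SB l : Inv T d SA SB l -> Inv T d SB SA (map sw l).
Proof.
  intros [Hiso [HS Hnd]]. split; [|split].
  - intros x y x' y' H1 H2. apply (proj1 (In_sw _ _ _ _)) in H1. apply (proj1 (In_sw _ _ _ _)) in H2. symmetry. apply Hiso; auto.
  - intros x y H. apply (proj1 (In_sw _ _ _ _)) in H. destruct (HS _ _ H). auto.
  - rewrite map_map. apply (nodup_snd T d Hm); auto.
Qed.

Lemma forth D T d SA SB (Hm : is_metric T d) (HdD : forall x y, In (d x y) D)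
  (HEP : EP D T d SB) l x :
  Inv T d SA SB l -> SA x -> exists l', Inv T d SA SB l' /\ incl l l' /\ In x (map fst l').
Proof.
  intros [Hiso [HS Hnd]] Hx.
  pose proof (d_nonneg T d Hm) as dnn.
  pose proof Hm as [H0 [Hs Ht]].
  destruct (classic (In x (map fst l))) as [Hin|Hnin].
  - exists l. split; [split; auto|]. split; auto. apply incl_refl.
  - set (pr := map (fun p => (snd p, d x (fst p))) l).
    assert (Hpr : forall p r, In (p,r) pr -> exists x', In (x',p) l /\ r = d x x').
    { intros p r H. apply in_map_iff in H as [[x' y'] [E H]]. simpl in E.
      injection E; intros; subst. eauto. }
    destruct (HEP pr) as [y [Hy Hyd]].
    + unfold pr. rewrite map_map. simpl. apply (nodup_snd T d Hm); auto.
    + intros p r H. destruct (Hpr p r H) as [x' [H1 E]]. subst.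
      destruct (HS _ _ H1). split; auto. split; auto.
      destruct (dnn x x') as [Hlt|Heq]; auto. exfalso. apply Hnin. symmetry in Heq. apply H0 in Heq. subst.
      apply in_map_iff. exists (x', p). auto.
    + intros p r p' r' H1 H2. destruct (Hpr p r H1) as [x1 [I1 E1]].
      destruct (Hpr p' r' H2) as [x2 [I2 E2]]. subst.
      rewrite <- (Hiso _ _ _ _ I1 I2).
      pose proof (Ht x1 x x2). pose proof (Ht x x2 x1). pose proof (Hs x x1). pose proof (Hs x2 x1). lra.
    + exists ((x,y)::l). split; [split; [|split]|split].
      * assert (Hxy : forall x' y', In (x',y') l -> d x x' = d y y').
        { intros x' y' H. symmetry. apply Hyd. apply in_map_iff. exists (x',y'). auto. }
        intros a b a' b' [E|H1] [E'|H2];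
          try (injection E as Ea Eb; subst a b); try (injection E' as Ea' Eb'; subst a' b').
        -- rewrite (proj2 (H0 x x) eq_refl), (proj2 (H0 y y) eq_refl). auto.
        -- auto.
        -- rewrite Hs, (Hs b). auto.
        -- auto.
      * intros a b [E|H]; [injection E as Ea Eb; subst a b; auto|auto].
      * simpl. constructor; auto.
      * intros q Hq. right. auto.
      * left. auto.
Qed.

Lemma back D T d SA SB (Hm : is_metric T d) (HdD : forall x y, In (d x y) D)
  (HEP : EP D T d SA) l y :
  Inv T d SA SB l -> SB y -> exists l', Inv T d SA SB l' /\ incl l l' /\ In y (map snd l').
Proof.
  intros Hl Hy.
  destruct (forth D T d SB SA Hm HdD HEP (map sw l) y (Inv_swap T d Hm SA SB l Hl) Hy)
    as [l'' [Hi [Hinc Hin]]].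
  exists (map sw l''). split; [|split].
  - pose proof (Inv_swap T d Hm SB SA l'' Hi). exact H.
  - intros [u v] H. apply (proj2 (In_sw _ _ _ _)). apply Hinc. apply (proj2 (In_sw _ _ _ _)). auto.
  - rewrite map_map. exact Hin.
Qed.

Lemma back_and_forth D T d SA SB (Hm : is_metric T d) (HdD : forall x y, In (d x y) D)
  (HA : EP D T d SA) (HB : EP D T d SB) (eA eB : nat -> T)
  (HeA : forall k, SA (eA k)) (HeB : forall k, SB (eB k))
  (HsA : forall x, SA x -> exists k, eA k = x) (HsB : forall y, SB y -> exists k, eB k = y)
  (t0 : T) :
  exists f : T -> T, (forall x y, SA x -> SA y -> d (f x) (f y) = d x y) /\
    (forall x, SA x -> SB (f x)) /\ (forall y, SB y -> exists x, SA x /\ f x = y).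
Proof.
  pose proof Hm as [H0 [Hs Ht]].
  set (inh := inhabits (@nil (T*T))).
  set (fw := fun l x => epsilon inh (fun l' => Inv T d SA SB l' /\ incl l l' /\ In x (map fst l'))).
  set (bw := fun l y => epsilon inh (fun l' => Inv T d SA SB l' /\ incl l l' /\ In y (map snd l'))).
  assert (Hfw : forall l x, Inv T d SA SB l -> SA x ->
             Inv T d SA SB (fw l x) /\ incl l (fw l x) /\ In x (map fst (fw l x))).
  { intros l x Hl Hx. unfold fw. apply epsilon_spec. apply forth with D; auto. }
  assert (Hbw : forall l y, Inv T d SA SB l -> SB y ->
             Inv T d SA SB (bw l y) /\ incl l (bw l y) /\ In y (map snd (bw l y))).
  { intros l y Hl Hy. unfold bw. apply epsilon_spec. apply back with D; auto. }
  set (G := fix G (k : nat) : list (T*T) :=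
              match k with O => nil | S k => bw (fw (G k) (eA k)) (eB k) end).
  assert (HGS : forall k, G (S k) = bw (fw (G k) (eA k)) (eB k)) by reflexivity.
  assert (Hinv : forall k, Inv T d SA SB (G k)).
  { induction k.
    - simpl. split; [|split]; simpl; try tauto. constructor.
    - rewrite HGS. destruct (Hfw (G k) (eA k) IHk (HeA k)) as [I1 _].
      apply (Hbw _ _ I1 (HeB k)). }
  assert (Hstep : forall k, incl (G k) (G (S k)) /\ In (eA k) (map fst (G (S k)))
                         /\ In (eB k) (map snd (G (S k)))).
  { intros k. rewrite HGS. destruct (Hfw (G k) (eA k) (Hinv k) (HeA k)) as [I1 [Inc1 In1]].
    destruct (Hbw _ _ I1 (HeB k)) as [I2 [Inc2 In2]].
    split; [|split]; auto.
    - eapply incl_tran; eauto.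
    - apply in_map_iff in In1 as [[u v] [E Hin]]. simpl in E. subst.
      apply in_map_iff. exists (eA k, v). auto. }
  assert (Hmono : forall k k', (k <= k')%nat -> incl (G k) (G k')).
  { intros k k' Hle. induction Hle. apply incl_refl.
    eapply incl_tran; [exact IHHle| apply Hstep]. }
  set (f := fun x => epsilon (inhabits t0) (fun y => exists k, In (x,y) (G k))).
  assert (Hf : forall x, SA x -> exists k, In (x, f x) (G k)).
  { intros x Hx. unfold f. apply epsilon_spec. destruct (HsA x Hx) as [k Ek].
    destruct (Hstep k) as [_ [Hin _]]. rewrite Ek in Hin.
    apply in_map_iff in Hin as [[u v] [E Hin]]. simpl in E. subst. eauto. }
  assert (Hcommon : forall x y x' y' k k', In (x,y) (G k) -> In (x',y') (G k') ->
                      d x x' = d y y').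
  { intros x y x' y' k k' H1 H2.
    apply (proj1 (Hinv (Nat.max k k'))); [apply (Hmono k)|apply (Hmono k')]; auto; lia. }
  exists f. split; [|split].
  - intros x y Hx Hy. destruct (Hf x Hx) as [k1 H1]. destruct (Hf y Hy) as [k2 H2].
    symmetry. eapply Hcommon; eauto.
  - intros x Hx. destruct (Hf x Hx) as [k H1]. apply (proj1 (proj2 (Hinv k)) _ _ H1).
  - intros y Hy. destruct (HsB y Hy) as [k Ek]. destruct (Hstep k) as [_ [_ Hin]].
    rewrite Ek in Hin. apply in_map_iff in Hin as [[u v] [E Hin]]. simpl in E. subst v.
    destruct (proj1 (proj2 (Hinv (S k))) _ _ Hin) as [Hu _].
    exists u. split; auto. destruct (Hf u Hu) as [k' H1].
    pose proof (Hcommon _ _ _ _ _ _ H1 Hin) as E.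
    rewrite (proj2 (H0 u u) eq_refl) in E. symmetry in E. apply H0. auto.
Qed.

Theorem lemma9p1
  (D : list R) (HD0 : In 0 D) (HDnn : forall r, In r D -> 0 <= r)
  (Huniv : universal D)
  (B1 B2 : list R) (HB1 : is_block D B1) (HB2 : is_block D B2) (Hne : B1 <> B2)
  (B : list R) (HB : is_block D B) (r0 : R) (Hr0 : is_min_pos D r0) (Hr0B : In r0 B)
  (m : R) (Hm : is_max_of B m)
  (M : Type) (d : M -> M -> R) (HM : in_UD D M d) (a : M) :
  exists f : M -> M,
    (forall x y, d (f x) (f y) = d x y) /\
    (forall y, ~ (d a y < m) <-> exists x, f x = y).
Proof.
  assert (HmD : In m D /\ 0 < m).
  { destruct HB as [b0 [rest [_ [Hpos _]]]]. apply Hpos. apply Hm. }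
  destruct HmD as [HmD Hm0].
  pose proof HM as [Hmet [[c Hc] [_ [[HdD _] _]]]].
  set (SB := fun y => ~ d a y < m).
  assert (HEB : EP D M d SB) by (apply EP_ball; auto).
  assert (HEA : EP D M d (fun _ => True)) by (apply (EP_full D M d HM a)).
  set (eA := fun k => epsilon (inhabits a) (fun x => c x = k)).
  assert (HsA : forall x, exists k, eA k = x).
  { intros x. exists (c x). apply Hc. unfold eA. apply epsilon_spec.
    eauto. }
  assert (Hnb : exists b, SB b).
  { destruct (HEB nil) as [b [Hb _]]; [constructor| simpl; tauto | simpl; tauto | eauto]. }
  destruct Hnb as [b Hb].
  set (eB := fun k => epsilon (inhabits a) (fun y => SB y /\ (SB (eA k) -> y = eA k))).
  assert (HeB : forall k, SB (eB k) /\ (SB (eA k) -> eB k = eA k)).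
  { intros k. unfold eB. apply epsilon_spec.
    destruct (classic (SB (eA k))); [exists (eA k)|exists b]; tauto. }
  destruct (back_and_forth D M d (fun _ => True) SB Hmet HdD HEA HEB eA eB)
    as [f [Hiso [HfB Hsurj]]]; auto.
  - intros k. apply HeB.
  - intros y Hy. destruct (HsA y) as [k Ek]. exists k. rewrite <- Ek.
    apply HeB. rewrite Ek. auto.
  - exists f. split; auto. intros y. split.
    + intros Hy. destruct (Hsurj y Hy) as [x [_ E]]. eauto.
    + intros [x E]. subst. apply (HfB x I).
Qed.
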